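(* Let $\lambda>0$, $m>0$, $n>0$, $\tan\theta=n/m$, and let $\varphi(\alpha,\beta)=\frac12(\alpha^2+2b\alpha\beta+a\beta^2)+c\alpha+d\beta$ be the conic through $X=(\lambda,0)$, $Y=(0,0)$, $Z=(m,n)$ satisfying (P1) $\varphi(X)=\varphi(Y)=\varphi(Z)=0$ and (P2) $Y-X$ is a positive multiple of $-\nabla\varphi(X)$ and $Z-Y$ is a positive multiple of $-\nabla\varphi(Y)$. Then the conic $\{\varphi=0\}$ is an ellipse if and only if $$0<m<\frac{4\lambda(1+\tan^2\theta)}{(\tan^2\theta+2)^2}.$$
   Context: The coefficients of such a conic are $b=\frac{n}{2m}$, $c=-\lambda/2$, $d=-b\lambda$, $a=\frac{(\lambda-m)(m^2+n^2)}{m n^2}$; the conic is an ellipse iff $a>b^2$. *)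

(* Defs.v *)
From mathcomp Require Import all_boot all_order all_algebra.
From mathcomp Require Import all_classical all_reals all_analysis.
Set Implicit Arguments. Unset Strict Implicit. Unset Printing Implicit Defensive.
Import Order.TTheory GRing.Theory Num.Theory.
Local Open Scope ring_scope.

Definition conic {R : realType} (a b c d : R) (p : R * R) : R :=
  2^-1 * (p.1 ^+ 2 + 2 * b * p.1 * p.2 + a * p.2 ^+ 2) + c * p.1 + d * p.2.

Definition conic_grad {R : realType} (a b c d : R) (p : R * R) : R * R :=
  (p.1 + b * p.2 + c, b * p.1 + a * p.2 + d).

Definition pos_multiple {R : realType} (u v : R * R) : Prop :=
  exists t : R, 0 < t /\ u = (t * v.1, t * v.2).

(* The conic {phi = 0} (passing through a point) is an ellipse iff its
   quadratic part is positive definite, i.e. a > b^2. *)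
Definition is_ellipse {R : realType} (a b c d : R) : Prop := b ^+ 2 < a.

(* Main.v *)
Require Import Defs.
From mathcomp Require Import all_boot all_order all_algebra.
From mathcomp Require Import all_classical all_reals all_analysis.
From mathcomp Require Import ring lra.
Import Order.TTheory GRing.Theory Num.Theory.
Local Open Scope ring_scope.

Theorem proposition2 (R : realType) (lam m n theta a b c d : R) :
  0 < lam -> 0 < m -> 0 < n -> tan theta = n / m ->
  (* (P1) *)
  conic a b c d (lam, 0) = 0 -> conic a b c d (0, 0) = 0 ->
  conic a b c d (m, n) = 0 ->
  (* (P2) *)
  pos_multiple ((0, 0) - (lam, 0))%R (- conic_grad a b c d (lam, 0))%R ->
  pos_multiple ((m, n) - (0, 0))%R (- conic_grad a b c d (0, 0))%R ->
  (is_ellipse a b c d <->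
   (0 < m /\ m < 4 * lam * (1 + tan theta ^+ 2) / (tan theta ^+ 2 + 2) ^+ 2)).
Proof.
move=> hl hm hn ht h1 _ h3 [t1 [t1p e1]] [t2 [t2p e2]].
case: e1 => e11 e12. case: e2 => e21 e22.
rewrite /conic /= in h1 h3.
rewrite /= !(mulr0, addr0, add0r, subr0, sub0r, oppr0, expr0n, mul0r) in e11 e12 e21 e22 h1.
have m0 : m != 0 by rewrite gt_eqF.
have n0 : n != 0 by rewrite gt_eqF.
have l0 : lam != 0 by rewrite gt_eqF.
have hc : c = - lam / 2.
  by apply: (mulIf l0); apply/eqP; rewrite -subr_eq0; apply/eqP; rewrite -[RHS]h1; field.
have hd : d = - b * lam.
  have : t1 * (b * lam + d) = 0.
    by apply/eqP; rewrite -oppr_eq0 -mulrN -e12.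
  move/eqP; rewrite mulf_eq0 gt_eqF //= => /eqP H.
  apply/eqP; rewrite -subr_eq0; apply/eqP; rewrite -[RHS]H; ring.
have hb : b = n / (2 * m).
  have hm2 : m = t2 * lam / 2 by rewrite e21 hc; field.
  have hn2 : n = t2 * b * lam by rewrite e22 hd; ring.
  rewrite hn2 hm2; field. by rewrite gt_eqF //= gt_eqF.
have ha : a = (lam - m) * (m ^+ 2 + n ^+ 2) / m / n ^+ 2.
  apply: (mulIf (expf_neq0 2 n0)).
  rewrite mulfVK ?expf_neq0 //.
  apply: (mulIf m0). rewrite mulfVK //.
  have H : 2 * m * ((2^-1 * (m ^+ 2 + 2 * b * m * n + a * n ^+ 2) + c * m + d * n)) = 0 by rewrite h3 mulr0.
  rewrite hc hd hb in H.
  apply/eqP; rewrite -subr_eq0; apply/eqP; rewrite -[RHS]H; field; exact: m0.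
have key : a - b ^+ 2 = (4 * lam * (1 + tan theta ^+ 2) - m * (tan theta ^+ 2 + 2) ^+ 2) * m / (4 * n ^+ 2).
  rewrite ha hb ht. field. by apply/andP.
have Z : 0 < (tan theta ^+ 2 + 2) ^+ 2.
  apply: exprn_gt0. apply: ltr_wpDl; [exact: sqr_ge0 | lra].
rewrite /is_ellipse ltr_pdivlMr //.
have -> : (b ^+ 2 < a) = (0 < a - b ^+ 2) by rewrite subr_gt0.
rewrite key.
set X := 4 * lam * _.
have -> : (m * (tan theta ^+ 2 + 2) ^+ 2 < X) = (0 < X - m * (tan theta ^+ 2 + 2) ^+ 2) by rewrite subr_gt0.
rewrite pmulr_lgt0; last by rewrite invr_gt0 mulr_gt0 // exprn_gt0.
rewrite pmulr_lgt0 //. by split => [H|[]]; [split|].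
Qed.
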